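(* Assume the standing setup below and additionally $n\ge 2s-2r+1$. Then for every integer $i$ with $0\le i\le s-2r+1$, \[ \binom{n-1}{i}+\binom{n-1}{i+1}+\cdots+\binom{n-1}{i+2r-1}+\dim\left(\frac{\langle L_H: H\in \bigcup_{j=i}^{s}\mathbb{P}_j(X)\rangle}{\langle L_H: H\in \bigcup_{j=i}^{i+2r-1}\mathbb{P}_j(X)\rangle}\right) \le \binom{n-1}{s-2r+1}+\binom{n-1}{s-2r+2}+\cdots+\binom{n-1}{s}, \] where $\langle S\rangle$ is the $\mathbb{F}_p$-span of $S$ and the fraction denotes the quotient vector space.
   Context: Standing setup: $p$ is a prime; $K=\{k_1,\ldots,k_r\}$ and $L=\{l_1,\ldots,l_s\}$ are disjoint subsets of $\{0,1,\ldots,p-1\}$; $\mathcal{A}=\{A_1,\ldots,A_m\}$ is a family of distinct subsets of $[n]$ with $|A_i|\pmod p\in K$ for all $i$ and $|A_i\cap A_j|\pmod p\in L$ for all $i\ne j$. Let $X=[n-1]$. Associate a variable $x_i$ to each $A_i$, and for each $I\subseteq X$ define the linear form over $\mathbb{F}_p$: $L_I=\sum_{i:\ I\subseteq A_i} x_i$. For $j\ge0$, $\mathbb{P}_j(X)$ is the set of $j$-element subsets of $X$. *)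

(* Defs.v *)
From HB Require Import structures.
From mathcomp Require Import all_boot all_order all_algebra.
Set Implicit Arguments. Unset Strict Implicit. Unset Printing Implicit Defensive.
Import GRing.Theory.
Local Open Scope ring_scope.

(* Ground set [n] is modelled by 'I_n (elements 0..n-1);
   X = [n-1] is the set of the first n-1 elements. *)
Definition Xset (n : nat) : {set 'I_n} := [set x : 'I_n | (val x < n.-1)%N].

(* The linear form L_I = sum_{i : I subset A_i} x_i over F_p, as a row vector
   of coefficients in the m variables x_1..x_m (x_i <-> delta_mx 0 i). *)
Definition Lform (p n m : nat) (A : 'I_m -> {set 'I_n}) (I : {set 'I_n})
  : 'rV['F_p]_m :=
  \sum_(i < m | I \subset A i) delta_mx 0 i.

(* Union of P_j(X) for lo <= j < hi (half-open, so empty ranges are handled exactly). *)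
Definition layers (n lo hi : nat) : {set {set 'I_n}} :=
  [set I : {set 'I_n} | (I \subset Xset n) && (lo <= #|I| < hi)%N].

Definition Lspan (p n m : nat) (A : 'I_m -> {set 'I_n}) (lo hi : nat)
  : {vspace 'rV['F_p]_m} :=
  <<[seq Lform p A H | H <- enum (layers n lo hi)]>>%VS.

(* dim (U / V) for a subspace V of U. *)
Definition quot_dim (F : fieldType) (vT : vectType F) (U V : {vspace vT}) : nat :=
  (\dim U - \dim V)%N.

(* Main.v *)
Require Import Defs.
From HB Require Import structures.
From mathcomp Require Import all_boot all_order all_algebra.
From mathcomp Require Import zify.
Set Implicit Arguments. Unset Strict Implicit. Unset Printing Implicit Defensive.
Import GRing.Theory.
Local Open Scope ring_scope.


Lemma subD1E (T : finType) (A S : {set T}) (j : T) : (A \subset S :\ j) = (A \subset S) && (j \notin A).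
Proof.
apply/idP/idP.
  move=> sub; rewrite (subset_trans sub (subsetDl _ _)) /=.
  by apply/negP => jB; move: (subsetP sub j jB); rewrite !inE eqxx.
case/andP=> sub jB; apply/subsetP => x xB; rewrite !inE (subsetP sub) // andbT.
by apply/eqP => E; rewrite -E xB in jB.
Qed.

Lemma sum_split1 (T : finType) (R : nmodType) (f : {set T} -> R) (S : {set T}) (j : T) (q : nat) :
  j \in S ->
  \sum_(A : {set T} | (A \subset S) && (#|A| == q.+1) && (j \in A)) f A =
  \sum_(B : {set T} | (B \subset S :\ j) && (#|B| == q)) f (j |: B).
Proof.
move=> jS.
rewrite (reindex_onto (fun B => j |: B) (fun A => A :\ j)); last first.
  by move=> A /andP[_ jA]; rewrite setD1K.
apply: eq_bigl => B.
case jB: (j \in B).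
  have -> : ((j |: B) :\ j == B) = false.
    by apply/negbTE/negP => /eqP E; move: jB; rewrite -E !inE eqxx.
  rewrite andbF; apply/esym/negbTE; rewrite negb_and; apply/orP; left.
  apply/negP => /subsetP /(_ j jB); by rewrite !inE eqxx.
rewrite setU1K ?jB // eqxx andbT setU11 andbT cardsU1 jB add1n eqSS.
congr (_ && _).
apply/idP/idP.
  move=> sub; apply/subsetP => x xB; rewrite !inE.
  have -> : x != j by apply/eqP => E; rewrite -E xB in jB.
  by rewrite (subsetP sub) // !inE xB orbT.
move=> sub; apply/subsetP => x; rewrite !inE => /orP[/eqP -> //|xB].
by move: (subsetP sub x xB); rewrite !inE => /andP[].
Qed.

Lemma sum_split2 (T : finType) (R : nmodType) (f : {set T} -> R) (S : {set T}) (j : T) (q : nat) :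
  j \in S ->
  \sum_(A : {set T} | (A \subset S) && (#|A| == q.+1)) f A =
  \sum_(A : {set T} | (A \subset S :\ j) && (#|A| == q.+1)) f A +
  \sum_(B : {set T} | (B \subset S :\ j) && (#|B| == q)) f (j |: B).
Proof.
move=> jS; rewrite (bigID (fun A : {set T} => j \in A)) /= addrC -sum_split1 //.
congr (_ + _); apply: eq_bigl => A.
by rewrite subD1E -andbA [(_ == _) && _]andbC andbA.
Qed.

Lemma sum_lift (T : finType) (F : fieldType) (z : {set T} -> F) (S : {set T}) (q : nat) :
  \sum_(A : {set T} | (A \subset S) && (#|A| == q.+1)) \sum_(j in A) z (A :\ j) =
  (#|S| - q)%:R * \sum_(B : {set T} | (B \subset S) && (#|B| == q)) z B.
Proof.
transitivity (\sum_(A : {set T} | (A \subset S) && (#|A| == q.+1))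
                \sum_(j in S | j \in A) z (A :\ j)).
  apply: eq_bigr => A /andP[sub _]; apply: eq_bigl => j.
  by case jA: (j \in A); rewrite ?andbF // (subsetP sub).
rewrite (exchange_big_dep (fun j => j \in S)) /=; last by move=> A j _ /andP[].
transitivity (\sum_(j in S) \sum_(B : {set T} | (B \subset S) && (#|B| == q) && (j \notin B)) z B).
  apply: eq_bigr => j jS.
  rewrite (eq_bigl (fun A : {set T} => (A \subset S) && (#|A| == q.+1) && (j \in A))); last first.
    by move=> A; rewrite jS.
  rewrite sum_split1 //.
  apply: eq_big => B.
    by rewrite subD1E -!andbA [(j \notin B) && _]andbC.
  move=> /andP[sub _]; rewrite setU1K //.
  by apply/negP => jB; move: (subsetP sub j jB); rewrite !inE eqxx.
rewrite (exchange_big_dep (fun B : {set T} => (B \subset S) && (#|B| == q))) /=; last first.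
  by move=> j B _ /andP[].
rewrite mulr_sumr; apply: eq_bigr => B /andP[sub /eqP cB].
rewrite (eq_bigl (fun j => j \in S :\: B)); last first.
  by move=> j; rewrite !inE sub /= cB eqxx /= andbC.
rewrite sumr_const mulr_natl; congr (_ *+ _).
by rewrite cardsDS // cB.
Qed.




Lemma exists_ksub (T : finType) (U : {set T}) (k : nat) : (k <= #|U|)%N -> exists K : {set T}, K \subset U /\ #|K| = k.
Proof.
elim: k => [|k IH] kU; first by exists set0; rewrite sub0set cards0.
have [K [KU cK]] := IH (ltnW kU).
have : (0 < #|U :\: K|)%N by rewrite cardsDS // cK subn_gt0.
case/card_gt0P => x; rewrite !inE => /andP[xK xU].
exists (x |: K); split; last by rewrite cardsU1 (negbTE xK) cK.
by apply/subsetP => z; rewrite !inE => /orP[/eqP->|/(subsetP KU)].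
Qed.

Lemma sum_eqcard (T : finType) (R : nmodType) (y : {set T} -> R) (K : {set T}) (t : nat) : #|K| = t ->
  \sum_(A : {set T} | (A \subset K) && (#|A| == t)) y A = y K.
Proof.
move=> cK; rewrite (big_pred1 K) // => A /=.
rewrite eqEcard -cK; apply/andP/andP => [[sub /eqP->]|[sub le]]; first by split.
split=> //; rewrite eqn_leq le andbT; exact: subset_leq_card.
Qed.

Lemma null_design (T : finType) (F : fieldType) (p : nat) (nz : forall x, (0 < x < p)%N -> x%:R != 0 :> F) :
 forall v t k (U : {set T}) (y : {set T} -> F), #|U| = v -> (t <= k)%N -> (t + k <= v)%N ->
 ((t < k)%N -> (k < p)%N) ->
 (forall K : {set T}, K \subset U -> #|K| = k -> \sum_(A : {set T} | (A \subset K) && (#|A| == t)) y A = 0) ->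
 forall A : {set T}, A \subset U -> #|A| = t -> y A = 0.
Proof.
elim=> [|v IH] t k U y cU tk tkv kp H A AU cA;
  (have [tltk|ket] := ltnP t k; last first).
- have tek : t = k by apply/eqP; rewrite eqn_leq tk ket.
  by have := H A AU (etrans cA tek); rewrite sum_eqcard.
- lia.
- have tek : t = k by apply/eqP; rewrite eqn_leq tk ket.
  by have := H A AU (etrans cA tek); rewrite sum_eqcard.
have kp' := kp tltk.
case: t tk tkv kp H cA tltk => [|t'] tk tkv kp H cA tltk.
  have [K [KU cK]] := exists_ksub (k := k) (U := U) ltac:(lia).
  have := H K KU cK; rewrite (big_pred1 set0); last first.
    by move=> B /=; rewrite cards_eq0 andbC; case: eqP => // ->; rewrite sub0set.
  by move=> <-; move/eqP: cA; rewrite cards_eq0 => /eqP->.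
have : (0 < #|U|)%N by lia.
case/card_gt0P => a aU.
set U' := U :\ a.
have cU' : #|U'| = v by move: cU; rewrite (cardsD1 a U) aU add1n => -[].
case: k tk tkv kp H tltk kp' => [|k'] // tk tkv kp H tltk kp'.
pose z := fun B : {set T} => y (a |: B).
pose c := ((k'.+1 - t'.+1)%:R : F)^-1.
pose w := fun B : {set T} => y B + c * \sum_(j in B) z (B :\ j).
have cnz : ((k'.+1 - t'.+1)%:R : F) != 0 by apply: nz; lia.
have c1nz : ((k'.+1 - t')%:R : F) != 0 by apply: nz; lia.
have Hw : forall B : {set T}, B \subset U' -> #|B| = t'.+1 -> w B = 0.
  apply: (IH t'.+1 k' U' w cU' ltac:(lia) ltac:(lia) ltac:(lia)) => K' K'U cK'.
  have aK' : a \notin K' by apply/negP => /(subsetP K'U); rewrite !inE eqxx.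
  have aK'U : a |: K' \subset U.
    apply/subsetP => x; rewrite !inE => /orP[/eqP->//|/(subsetP K'U)].
    by rewrite !inE => /andP[].
  have := H (a |: K') aK'U ltac:(rewrite cardsU1 aK' cK' //).
  rewrite (sum_split2 _ _ (setU11 a K')) setU1K //.
  rewrite /w big_split /= -mulr_sumr sum_lift cK'.
  have e : (k' - t')%N = (k'.+1 - t'.+1)%N by [].
  by rewrite e /c mulrA mulVf // mul1r.
have Hz : forall B : {set T}, B \subset U' -> #|B| = t' -> z B = 0.
  apply: (IH t' k'.+1 U' z cU' ltac:(lia) ltac:(lia) ltac:(lia)) => K KU' cK.
  have KU : K \subset U by apply: subset_trans KU' (subsetDl _ _).
  have := H K KU cK.
  rewrite (eq_bigr (fun B : {set T} => - (c * \sum_(j in B) z (B :\ j)))); last first.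
    move=> B /andP[BK /eqP cB].
    have := Hw B (subset_trans BK KU') cB; rewrite /w => /eqP; rewrite addr_eq0 => /eqP //.
  rewrite sumrN -mulr_sumr sum_lift cK => /eqP; rewrite oppr_eq0 !mulf_eq0 invr_eq0.
  by rewrite (negbTE cnz) (negbTE c1nz) /= => /eqP.
case aA: (a \in A).
  rewrite -(setD1K aA); apply: Hz.
    by rewrite /U' setSD.
  by move: cA; rewrite (cardsD1 a A) aA add1n => -[].
have AU' : A \subset U' by rewrite /U' subD1E AU aA.
have := Hw A AU' cA; rewrite /w big1 ?mulr0 ?addr0 // => j jA.
apply: Hz; first by apply: subset_trans (subsetDl _ _) AU'.
by move: cA; rewrite (cardsD1 j A) jA add1n => -[].
Qed.


Lemma count_sub (T : finType) (R : nzSemiRingType) (S : {set T}) (q : nat) :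
  \sum_(C : {set T} | (C \subset S) && (#|C| == q)) (1 : R) = ('C(#|S|, q))%:R.
Proof.
move: {2}#|S| (erefl #|S|) => s; elim: s S q => [|s IH] S q cS.
  have S0 : S = set0 by apply/eqP; rewrite -cards_eq0 cS.
  subst S; case: q => [|q].
    rewrite (big_pred1 set0) ?bin0 // => C /=; rewrite subset0 cards_eq0 andbb //.
  rewrite big_pred0 => [|C]; first by rewrite cards0 bin0n.
  by rewrite subset0; case: eqP => // ->; rewrite cards0.
case: q => [|q].
  rewrite (big_pred1 set0) ?bin0 // => C /=; rewrite cards_eq0 andbC.
  by case: eqP => // ->; rewrite sub0set.
have : (0 < #|S|)%N by rewrite cS.
case/card_gt0P => j jS.
have cS' : #|S :\ j| = s by move: cS; rewrite (cardsD1 j S) jS add1n => -[].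
by rewrite (sum_split2 _ _ jS) (eq_bigr (fun _ => 1)) // !IH // cS binS natrD cS' addrC.
Qed.

Lemma count_int (T : finType) (R : nzSemiRingType) (I B : {set T}) (t q : nat) :
  I \subset B -> #|I| = t ->
  \sum_(J : {set T} | (I \subset J) && (J \subset B) && (#|J| == t + q)) (1 : R) = ('C(#|B| - t, q))%:R.
Proof.
move=> IB cI.
rewrite (reindex_onto (fun C => I :|: C) (fun J => J :\: I)); last first.
  move=> J /andP[/andP[IJ _] _]; apply/setP => x; rewrite !inE.
  by case xI: (x \in I) => //=; rewrite (subsetP IJ).
rewrite -cI -(cardsDS IB) -count_sub; apply: eq_bigl => C.
rewrite subsetUl /= subUset IB /= subsetD.
have [dCI|ndCI] := boolP [disjoint C & I].
  rewrite setDUl setDv set0U (setDidPl dCI) eqxx andbT andbT.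
  rewrite cardsU.
  have -> : I :&: C = set0 by apply/eqP; rewrite setIC setI_eq0.
  by rewrite cards0 subn0 eqn_add2l.
rewrite andbF; apply/negbTE; rewrite setDUl setDv set0U.
by apply/negP => /andP[_ /eqP/setDidPl]; apply/negP.
Qed.

Definition Fq (p n m : nat) (A : 'I_m -> {set 'I_n}) (I : {set 'I_n}) (t q : nat) : 'rV['F_p]_m :=
  \sum_(J : {set 'I_n} | (J \subset Xset n) && (#|J| == (t + q)%N) && (I \subset J)) Lform p A J.

Lemma Fq_E (p n m : nat) (A : 'I_m -> {set 'I_n}) (I : {set 'I_n}) (t q : nat) :
  I \subset Xset n -> #|I| = t ->
  Fq p A I t q = \sum_(a | I \subset A a) ('C(#|A a :&: Xset n| - t, q))%:R *: delta_mx 0 a.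
Proof.
move=> IX cI; rewrite /Fq /Lform.
rewrite (exchange_big_dep xpredT) //= [RHS]big_mkcond /=; apply: eq_bigr => a _.
rewrite (eq_bigr (fun J => 1 *: delta_mx 0 a)); last by move=> *; rewrite scale1r.
rewrite -scaler_suml.
case IA: (I \subset A a).
  congr (_ *: _); rewrite -(count_int _ _ (B := A a :&: Xset n) _ cI); last by rewrite subsetI IA.
  apply: eq_bigl => J; rewrite subsetI.
  by case: (I \subset J); case: (J \subset Xset n); case: (J \subset A a); rewrite ?andbF ?andbT.
rewrite big_pred0 ?scale0r // => J; apply/negbTE/negP => /andP[/andP[_ IJ] JA].
by rewrite (subset_trans IJ JA) in IA.
Qed.

Lemma Fp_nz (p x : nat) : prime p -> (0 < x < p)%N -> (x%:R : 'F_p) != 0.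
Proof.
move=> pp /andP[x0 xp]; apply/negP => /eqP e.
have := val_Fp_nat pp x; rewrite e modn_small //= => e'.
by rewrite -e' in x0.
Qed.

Lemma Fp_fact_nz (p x : nat) : prime p -> (x < p)%N -> ((x`!)%:R : 'F_p) != 0.
Proof.
move=> pp xp; rewrite fact_prod natr_prod prodf_seq_neq0; apply/allP => j.
rewrite mem_index_iota => /andP[j0 jx] /=; apply: Fp_nz => //; lia.
Qed.

Definition Epoly (p n m : nat) (A : 'I_m -> {set 'I_n}) (I : {set 'I_n}) (t : nat) (P : {poly 'F_p}) : 'rV['F_p]_m :=
  \sum_(a | I \subset A a) P.[(#|A a :&: Xset n| - t)%:R] *: delta_mx 0 a.

Lemma Epoly_add p n m A I t (P Q : {poly 'F_p}) :
  @Epoly p n m A I t (P + Q) = Epoly A I t P + Epoly A I t Q.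
Proof. by rewrite /Epoly -big_split; apply: eq_bigr => a _; rewrite hornerD scalerDl. Qed.

Lemma Epoly_scale p n m A I t (c : 'F_p) (P : {poly 'F_p}) :
  @Epoly p n m A I t (c *: P) = c *: Epoly A I t P.
Proof. by rewrite /Epoly scaler_sumr; apply: eq_bigr => a _; rewrite hornerZ scalerA. Qed.

Lemma Epoly0 p n m A I t : @Epoly p n m A I t 0 = 0.
Proof. by rewrite /Epoly big1 // => a _; rewrite horner0 scale0r. Qed.

Definition FF (p q : nat) : {poly 'F_p} := \prod_(z <- [seq (j%:R : 'F_p) | j <- iota 0 q]) ('X - z%:P).

Lemma size_FF p q : size (FF p q) = q.+1.
Proof. by rewrite /FF size_prod_XsubC size_map size_iota. Qed.

Lemma monic_FF p q : FF p q \is monic.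
Proof. exact: monic_prod_XsubC. Qed.

Lemma FF_eval p q x : (FF p q).[x%:R] = (q`!)%:R * ('C(x, q))%:R.
Proof.
rewrite -natrM mulnC bin_ffact ffact_prod /FF horner_prod big_map natr_prod.
rewrite -(big_mkord xpredT (fun i => (x - i)%:R)) /index_iota subn0.
have [qx|xq] := leqP q x.
  apply: eq_big_seq => j; rewrite mem_iota add0n => /andP[_ jq].
  by rewrite hornerXsubC natrB //; lia.
rewrite (bigD1_seq x) ?mem_iota ?iota_uniq //=.
rewrite hornerXsubC subrr mul0r.
rewrite (bigD1_seq x) ?mem_iota ?iota_uniq //=.
by rewrite subnn mul0r.
Qed.

Lemma size_red (F : fieldType) (P Q : {poly F}) d :
  size P = d.+1 -> Q \is monic -> size Q = d.+1 -> (size (P - lead_coef P *: Q)%R <= d)%N.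
Proof.
move=> sP mQ sQ; apply/leq_sizeP => j dj.
rewrite coefB coefZ.
have [jd|jd] := ltnP d j.
  have P0 : P`_j = 0 by apply: (elimT (leq_sizeP P _) (leqnn _)); rewrite sP.
  have Q0 : Q`_j = 0 by apply: (elimT (leq_sizeP Q _) (leqnn _)); rewrite sQ.
  by rewrite P0 Q0 mulr0 subr0.
have -> : j = d by apply/eqP; rewrite eqn_leq jd dj.
have := mQ; rewrite monicE /lead_coef sQ /= => /eqP ->.
by rewrite mulr1 /lead_coef sP subrr.
Qed.

Lemma E_span p n m A I t (S : {vspace 'rV['F_p]_m}) d :
  (forall q, (q < d)%N -> @Epoly p n m A I t (FF p q) \in S) ->
  forall P : {poly 'F_p}, (size P <= d)%N -> Epoly A I t P \in S.
Proof.
elim: d => [|d IH] H P sP.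
  by move: sP; rewrite leqn0 size_poly_eq0 => /eqP ->; rewrite Epoly0 mem0v.
have [sPd|] := leqP (size P) d.
  by apply: IH => // q qd; apply: H; lia.
move=> dsP; have sPe : size P = d.+1 by lia.
rewrite -(subrK (lead_coef P *: FF p d) P) Epoly_add Epoly_scale.
rewrite memvD ?memvZ //; last by apply: H.
apply: IH; first by move=> q qd; apply: H; lia.
by apply: size_red => //; [apply: monic_FF | apply: size_FF].
Qed.

Lemma card_AX n (B : {set 'I_n}) :
  #|B| = #|B :&: Xset n| \/ #|B| = (#|B :&: Xset n|).+1.
Proof.
rewrite -(cardsID (Xset n) B).
have : (#|B :\: Xset n| <= 1)%N.
  apply/card_le1_eqP => x y; rewrite !inE -!leqNgt => /andP[xX _] /andP[yX _].
  apply: val_inj => /=; have := ltn_ord x; have := ltn_ord y.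
  move: xX yX; rewrite /=; lia.
case: #|B :\: Xset n| => [|[|]] //; rewrite ?addn0 ?addn1; by [left|right].
Qed.

Lemma Lform_in_span p n m (A : 'I_m -> {set 'I_n}) lo hi H :
  H \in layers n lo hi -> Lform p A H \in Lspan p A lo hi.
Proof. by move=> HH; apply: memv_span; apply/mapP; exists H; rewrite ?mem_enum. Qed.

Lemma rel_main p n m (A : 'I_m -> {set 'I_n}) (K : {set 'I_p}) (pp : prime p)
  (hK : forall a : 'I_m, [exists k in K, val k == (#|A a| %% p)%N]) t (I : {set 'I_n}) lo :
  (lo <= t)%N -> I \subset Xset n -> #|I| = t -> (2 * #|K| < p)%N ->
  Fq p A I t (2 * #|K|) \in Lspan p A lo (t + 2 * #|K|).
Proof.
move=> lot IX cI r2p.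
set r2 := (2 * #|K|)%N; set S := Lspan p A lo (t + r2).
have EF : forall q, Epoly A I t (FF p q) = (q`!)%:R *: Fq p A I t q.
  move=> q; rewrite Fq_E // scaler_sumr /Epoly; apply: eq_bigr => a _.
  by rewrite FF_eval scalerA.
have FqS : forall q, (q < r2)%N -> Fq p A I t q \in S.
  move=> q qr; rewrite /Fq; apply: memv_suml => J /andP[/andP[JX /eqP cJ] _].
  apply: Lform_in_span; rewrite inE JX cJ /=.
  by rewrite (leq_trans lot (leq_addr _ _)) /= ltn_add2l.
have HF : forall q, (q < r2)%N -> Epoly A I t (FF p q) \in S.
  by move=> q qr; rewrite EF memvZ // FqS.
pose s := [seq (val k)%:R - t%:R | k <- enum K] ++ [seq (val k)%:R - 1 - t%:R | k <- enum K] : seq 'F_p.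
pose h := \prod_(z <- s) ('X - z%:P).
have sh : size h = r2.+1.
  rewrite size_prod_XsubC size_cat !size_map -cardE /r2.
  by rewrite mul2n -addnn.
have mh : h \is monic by apply: monic_prod_XsubC.
have Eh : Epoly A I t h = 0.
  rewrite /Epoly big1 // => a IA.
  have /rootP -> : root h (#|A a :&: Xset n| - t)%:R; last by rewrite scale0r.
  rewrite root_prod_XsubC.
  have tv : (t <= #|A a :&: Xset n|)%N by rewrite -cI; apply: subset_leq_card; rewrite subsetI IA.
  have /existsP[k /andP[kK /eqP ek]] := hK a.
  have kE : ((val k)%:R : 'F_p) = (#|A a|)%:R by rewrite ek Fp_nat_mod.
  rewrite natrB // mem_cat; case: (card_AX (A a)) => e; rewrite e in kE.
    by apply/orP; left; apply/mapP; exists k; rewrite ?mem_enum // kE.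
  apply/orP; right; apply/mapP; exists k; rewrite ?mem_enum // kE.
  by rewrite -addn1 natrD addrK.
have EFr : Epoly A I t (FF p r2) \in S.
  have D : Epoly A I t (h - lead_coef h *: FF p r2) + Epoly A I t (lead_coef h *: FF p r2) = 0.
    by rewrite -Epoly_add subrK.
  have sz := size_red sh (monic_FF p r2) (size_FF p r2).
  move: D sz; rewrite (eqP mh) !scale1r => /eqP; rewrite addrC addr_eq0 => /eqP -> sz.
  by rewrite memvN; apply: (E_span HF).
move: EFr; rewrite EF => /(memvZ ((r2`!)%:R^-1)).
by rewrite scalerA mulVf ?scale1r //; apply: Fp_fact_nz; lia.
Qed.

Definition D (p n : nat) := {ffun {set 'I_n} -> ('F_p)^o}.

Definition fmap (p n m : nat) (A : 'I_m -> {set 'I_n}) (k : nat) (g : D p n) : 'rV['F_p]_m :=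
  \sum_(J in layers n k k.+1) g J *: Lform p A J.

Lemma fmap_lin p n m A k : linear (@fmap p n m A k).
Proof.
move=> c g1 g2; rewrite /fmap scaler_sumr -big_split; apply: eq_bigr => J _.
by rewrite !ffunE scalerDl scalerA.
Qed.

HB.instance Definition _ p n m A k :=
  GRing.isLinear.Build 'F_p (D p n) 'rV['F_p]_m _ (@fmap p n m A k) (@fmap_lin p n m A k).

Definition Phi (p n t k : nat) (y : D p n) : D p n :=
  [ffun J => if J \in layers n k k.+1 then \sum_(T in layers n t t.+1 | T \subset J) y T else 0].

Lemma Phi_lin p n t k : linear (@Phi p n t k).
Proof.
move=> c g1 g2; apply/ffunP => J; rewrite !ffunE.
case: ifP => _; last by rewrite scaler0 addr0.
rewrite scaler_sumr -big_split; apply: eq_bigr => T _.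
by rewrite !ffunE.
Qed.

HB.instance Definition _ p n t k :=
  GRing.isLinear.Build 'F_p (D p n) (D p n) _ (@Phi p n t k) (@Phi_lin p n t k).

Definition ev (p n t : nat) (y : D p n) : 'rV['F_p]_#|layers n t t.+1| :=
  \row_(i < #|layers n t t.+1|) y (enum_val i).

Lemma ev_lin p n t : linear (@ev p n t).
Proof. by move=> c g1 g2; apply/rowP => i; rewrite !mxE !ffunE. Qed.

HB.instance Definition _ p n t :=
  GRing.isLinear.Build 'F_p (D p n) _ _ (@ev p n t) (@ev_lin p n t).

Definition delt (p n : nat) (J : {set 'I_n}) : D p n := [ffun J' => (J' == J)%:R].

Lemma card_Xset n : #|Xset n| = n.-1.
Proof.
have -> : Xset n = [set widen_ord (leq_pred n) i | i : 'I_n.-1].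
  apply/setP => x; rewrite !inE; apply/idP/imsetP.
    by move=> xn; exists (Ordinal xn) => //; apply: val_inj.
  by case=> i _ ->; rewrite /= ltn_ord.
by rewrite card_imset ?card_ord // => i j /(congr1 val) /= /val_inj.
Qed.

Lemma card_layer n j : #|layers n j j.+1| = 'C(n.-1, j).
Proof.
have := count_sub nat (Xset n) j; rewrite natn card_Xset => <-.
have -> : (\sum_(C : {set 'I_n} | (C \subset Xset n) && (#|C| == j)) (1:nat))%R =
          (\sum_(C : {set 'I_n} | (C \subset Xset n) && (#|C| == j)) 1)%N by [].
rewrite -sum1_card; apply: eq_bigl => I.
by rewrite inE ltnS -eqn_leq eq_sym.
Qed.

Lemma fmap_Phi p n m (A : 'I_m -> {set 'I_n}) t k (y : D p n) : (t <= k)%N ->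
  @fmap p n m A k (@Phi p n t k y) = \sum_(T in layers n t t.+1) y T *: Fq p A T t (k - t).
Proof.
move=> tk; rewrite /fmap.
rewrite (eq_bigr (fun J : {set 'I_n} => \sum_(T in layers n t t.+1 | T \subset J) y T *: Lform p A J)); last first.
  by move=> J JL; rewrite ffunE JL scaler_suml.
rewrite (exchange_big_dep (mem (layers n t t.+1))) /=; last by move=> J T _ /andP[].
apply: eq_bigr => T TL; rewrite /Fq scaler_sumr; apply: eq_bigl => J.
rewrite TL /= inE subnKC // ltnS -eqn_leq [k == _]eq_sym andbC.
by case: (T \subset J); rewrite ?andbF ?andbT.
Qed.

Lemma step p n m (A : 'I_m -> {set 'I_n}) (K : {set 'I_p}) (pp : prime p)
  (hK : forall a : 'I_m, [exists k in K, val k == (#|A a| %% p)%N]) t k lo :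
  (lo <= t)%N -> k = (t + 2 * #|K|)%N -> (2 * #|K| < p)%N -> ((t < k)%N -> (k < p)%N) ->
  (t + k <= n.-1)%N ->
  (\dim (Lspan p A lo k.+1) + 'C(n.-1, t) <= \dim (Lspan p A lo k) + 'C(n.-1, k))%N /\
  ('C(n.-1, t) <= 'C(n.-1, k))%N.
Proof.
move=> lot kE r2p kp tkn.
have tk : (t <= k)%N by rewrite kE leq_addr.
rewrite -!card_layer.
set lt := layers n t t.+1; set lk := layers n k k.+1.
pose f := linfun (@fmap p n m A k).
pose Ph := linfun (@Phi p n t k).
pose e := linfun (@ev p n t).
pose R := (Ph @: fullv)%VS.
pose Dk := <<[seq @delt p n J | J <- enum lk]>>%VS.
pose Q := <<[seq Lform p A J | J <- enum lk]>>%VS.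
have fR : (f @: R <= Lspan p A lo k)%VS.
  apply/subvP => x /memv_imgP [g /memv_imgP [y _ ->] ->]; rewrite !lfunE /= fmap_Phi //.
  apply: memv_suml => T; rewrite inE => /andP[TX /andP[tT Tt]]; apply: memvZ.
  have cT : #|T| = t by apply/eqP; rewrite eqn_leq tT -ltnS Tt.
  rewrite kE addKn; apply: rel_main => //.
have fDk : (f @: Dk)%VS = Q.
  rewrite limg_span -map_comp; congr <<_>>%VS; apply/eq_in_map => J; rewrite mem_enum => JL /=.
  rewrite lfunE /= /fmap (bigD1 J) //= big1 => [|J' /andP[_ ne]]; rewrite ffunE.
    by rewrite eqxx scale1r addr0.
  by rewrite (negbTE ne) scale0r.
have Lsub : (Lspan p A lo k.+1 <= Lspan p A lo k + Q)%VS.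
  apply/span_subvP => x /mapP [H]; rewrite mem_enum inE => /andP[HX /andP[loH Hk]] ->.
  have [Hk'|Hk'] := ltnP #|H| k.
    by apply: (subvP (addvSl _ _)); apply: Lform_in_span; rewrite inE HX loH Hk'.
  apply: (subvP (addvSr _ _)); apply: memv_span; apply/mapP; exists H => //.
  by rewrite mem_enum inE HX Hk' ltnS -ltnS.
have RDk : (R <= Dk)%VS.
  apply/subvP => g /memv_imgP [y _ ->]; rewrite lfunE /=.
  have -> : @Phi p n t k y = \sum_(J in lk) (@Phi p n t k y J) *: @delt p n J.
    apply/ffunP => J'; rewrite sum_ffunE.
    case J'L: (J' \in lk).
      rewrite (bigD1 J') //= big1 => [|J /andP[_ ne]]; rewrite !ffunE.
        by rewrite eqxx addr0; exact: (esym (mulr1 _)).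
      by rewrite eq_sym (negbTE ne) scaler0.
    rewrite big1 => [|J JL]; rewrite !ffunE ?J'L //.
    have -> : (J' == J) = false by apply/negbTE/eqP => E; rewrite E JL in J'L.
    by rewrite scaler0.
  apply: memv_suml => J JL; apply: memvZ; apply: memv_span; apply/mapP; exists J => //.
  by rewrite mem_enum.
have dDk : (\dim Dk <= #|lk|)%N by rewrite (leq_trans (dim_span _)) // size_map -cardE.
have dR : (#|lt| <= \dim R)%N.
  have kerS : (lker Ph <= lker e)%VS.
    apply/subvP => y; rewrite !memv_ker !lfunE /= => /eqP Py.
    apply/eqP/rowP => i; rewrite !mxE.
    have := enum_valP i; rewrite inE => /andP[TX /andP[tT Tt]].
    apply: (null_design (T:='I_n) (F:='F_p) (p:=p) _ (v := n.-1) (t := t) (k := k) (U := Xset n) (y := fun S => y S)) => //.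
    - by move=> x hx; apply: Fp_nz.
    - exact: card_Xset.
    - move=> K0 K0X cK0; have := congr1 (fun g : D p n => g K0) Py; rewrite /= !ffunE.
      have -> : K0 \in lk by rewrite inE K0X cK0 leqnn ltnSn.
      move=> E; rewrite -[X in _ = X]E.
      apply: eq_bigl => T0; rewrite inE ltnS -eqn_leq eq_sym.
      case T0K: (T0 \subset K0); rewrite ?andbF ?andbT //.
      by rewrite (subset_trans T0K K0X).
    - by apply/eqP; rewrite eqn_leq tT -ltnS Tt.
  have eS : (fullv <= e @: fullv)%VS.
    apply/subvP => u _; rewrite (row_sum_delta u); apply: memv_suml => i _; apply: memvZ.
    have -> : 'e_i = e (@delt p n (enum_val i)).
      rewrite lfunE /=; apply/rowP => j; rewrite !mxE ffunE.
      by rewrite (inj_eq enum_val_inj) eq_sym.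
    exact: memv_img (memvf _).
  have h1 := limg_ker_dim Ph fullv.
  have h2 := limg_ker_dim e fullv.
  have h3 := dimvS eS; rewrite dimvf dim_matrix mul1r -/lt in h3.
  have h4 := dimvS kerS.
  rewrite !capfv in h1 h2; rewrite /R; apply: (leq_trans h3).
  by rewrite -(leq_add2l (\dim (lker Ph))) h1 -h2 leq_add2r.
have D1 : Dk = (Dk :\: R + R)%VS by rewrite -{1}(addv_diff_cap Dk R) (capv_idPr RDk).
have Lsub2 : (Lspan p A lo k.+1 <= Lspan p A lo k + f @: (Dk :\: R))%VS.
  apply: subv_trans Lsub _; rewrite -fDk {1}D1 limgD.
  rewrite subv_add addvSl /= subv_add addvSr /=.
  exact: subv_trans fR (addvSl _ _).
have d1 := dimvS Lsub2.
have d2 := (dimv_add_leqif (Lspan p A lo k) (f @: (Dk :\: R))).1.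
have d3 := limg_ker_dim f (Dk :\: R).
have d4 := dimv_cap_compl Dk R; rewrite (capv_idPr RDk) in d4.
have d5 := dimvS RDk.
have e1 : (\dim (f @: (Dk :\: R)) <= \dim (Dk :\: R))%N by rewrite -d3 leq_addl.
have e2 := leq_trans d1 d2.
split; last by apply: leq_trans dR (leq_trans d5 dDk).
apply: (leq_trans (leq_add e2 dR)); rewrite -addnA leq_add2l.
apply: (leq_trans (leq_add e1 (leqnn _))); by rewrite addnC d4.
Qed.

Local Close Scope ring_scope.

Lemma window (F : nat -> nat) a w :
  \sum_(a.+1 <= j < a.+1 + w) F j + F a = \sum_(a <= j < a + w) F j + F (a + w).
Proof.
have h1 : \sum_(a <= j < (a + w).+1) F j = F a + \sum_(a.+1 <= j < (a + w).+1) F j.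
  by rewrite big_ltn // ltnS leq_addr.
have h2 : \sum_(a <= j < (a + w).+1) F j = \sum_(a <= j < a + w) F j + F (a + w).
  by rewrite big_nat_recr // leq_addr.
by rewrite addSn -h2 h1 addnC.
Qed.

Theorem mainTheorem6 (p n m : nat) (K L : {set 'I_p}) (A : 'I_m -> {set 'I_n})
  (i : nat) :
  prime p ->
  [disjoint K & L] ->
  injective A ->
  (forall a : 'I_m, [exists k in K, val k == #|A a| %% p]) ->
  (forall a b : 'I_m, a != b -> [exists l in L, val l == #|A a :&: A b| %% p]) ->
  (2 * #|L| + 1 <= n + 2 * #|K|) ->
  (i + 2 * #|K| <= #|L| + 1) ->
  \sum_(i <= j < i + 2 * #|K|) 'C(n.-1, j)
    + quot_dim (Lspan p A i #|L|.+1) (Lspan p A i (i + 2 * #|K|))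
  <= \sum_(#|L|.+1 - 2 * #|K| <= j < #|L|.+1) 'C(n.-1, j).
Proof.
move=> pp dKL _ hK _ hn hi.
have rs : (0 < #|K| -> #|L| < p)%N.
  move=> r0; have : (#|K :|: L| <= p)%N by rewrite -[X in (_ <= X)%N]card_ord max_card.
  rewrite cardsU; move: dKL; rewrite -setI_eq0 => /eqP ->; rewrite cards0 subn0; lia.
have p0 := prime_gt0 pp.
have Q : forall d, (i + 2 * #|K| + d <= #|L|.+1)%N ->
  (\dim (Lspan p A i (i + 2 * #|K| + d)) + \sum_(i <= j < i + 2 * #|K|) 'C(n.-1, j)
    <= \dim (Lspan p A i (i + 2 * #|K|)) + \sum_(i + d <= j < i + d + 2 * #|K|) 'C(n.-1, j))%N.
  elim=> [|d IH] hd; first by rewrite !addn0.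
  have IH' := IH ltac:(lia).
  have [st cb] := @step p n m A K pp hK (i + d) (i + 2 * #|K| + d) i (leq_addr _ _)
     ltac:(lia) ltac:(lia) ltac:(lia) ltac:(lia).
  have wd := window (fun j => 'C(n.-1, j)) (i + d) (2 * #|K|).
  have cE : 'C(n.-1, i + d + 2 * #|K|) = 'C(n.-1, i + 2 * #|K| + d) by rewrite addnAC.
  rewrite cE in wd.
  rewrite !addnS.
  move: IH' st wd.
  set a1 := \dim _; set a2 := \dim _; set a3 := \dim _.
  set b1 := \sum_(_ <= _ < _) _; set b2 := \sum_(_ <= _ < _) _; set b3 := \sum_(_ <= _ < _) _.
  set c1 := 'C(_, _); set c2 := 'C(_, _).
  clearbody a1 a2 a3 b1 b2 b3 c1 c2.
  lia.
have hd : (i + 2 * #|K| + (#|L|.+1 - (i + 2 * #|K|)) <= #|L|.+1)%N by lia.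
have := Q _ hd.
have e1 : (i + 2 * #|K| + (#|L|.+1 - (i + 2 * #|K|)))%N = #|L|.+1 by lia.
have e2 : (i + (#|L|.+1 - (i + 2 * #|K|)))%N = (#|L|.+1 - 2 * #|K|)%N by lia.
have e3 : (#|L|.+1 - 2 * #|K| + 2 * #|K|)%N = #|L|.+1 by lia.
rewrite e1 e2 e3 /quot_dim.
have mono : (\dim (Lspan p A i (i + 2 * #|K|)) <= \dim (Lspan p A i #|L|.+1))%N.
  apply: dimvS; apply/span_subvP => x /mapP [H]; rewrite mem_enum inE => /andP[HX /andP[iH Hk]] ->.
  apply: Lform_in_span; rewrite inE HX iH /=.
  by apply: (leq_trans Hk); move: hi; rewrite addn1.
move: mono.
set a1 := \dim _; set a2 := \dim _.
set b1 := \sum_(_ <= _ < _) _; set b2 := \sum_(_ <= _ < _) _.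
clearbody a1 a2 b1 b2.
lia.
Qed.
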